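(* Let $\Sigma$ be a finite alphabet and suppose $C:\Sigma^k\to\Sigma^n$ is a $(q,\delta,1-\varepsilon,s)$-relaxed locally decodable code with a nonadaptive relaxed decoder, where $s<|\Sigma|^{-q}$. Then for any error radius \[ r\in\Bigl(0,\ \tfrac{\delta(|\Sigma|-1)}{q|\Sigma|}\Bigl(1-\tfrac{\varepsilon|\Sigma|}{|\Sigma|-1}-s|\Sigma|^{q}\Bigr)\Bigr), \] the code $C$ is also a \[ \Bigl(q,\ r,\ \varepsilon+s|\Sigma|^{q}\Bigl(1-\tfrac{1}{|\Sigma|}\Bigr)+\tfrac{rq}{\delta}\Bigr)\text{-locally decodable code}. \] In particular, for $\Sigma=\{0,1\}$ it is a $\bigl(q,r,\varepsilon+\frac{s2^q}{2}+\frac{rq}{\delta}\bigr)$-locally decodable code.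
   Context: $\Delta$ denotes Hamming distance. A code $C:\Sigma^k\to\Sigma^n$ is a $(q,\delta,s)$-LDC if there is a randomized decoder reading at most $q$ positions of its oracle $y\in\Sigma^n$ and outputting a symbol in $\Sigma$ such that for all $b\in\Sigma^k$, $i\in[k]$, $y$ with $\Delta(y,C(b))\le\delta n$, $\Pr[\mathsf{Dec}^y(i)\ne b_i]\le s$. $C$ is a $(q,\delta,c,s)$-RLDC if there is a $q$-query decoder with outputs in $\Sigma\cup\{\bot\}$ such that for all such $b,i,y$: (completeness) $\Pr[\mathsf{Dec}^{C(b)}(i)=b_i]\ge c$, and (soundness) $\Pr[\mathsf{Dec}^y(i)\notin\{b_i,\bot\}]\le s$. A decoder is nonadaptive if the positions it queries do not depend on answers to earlier queries. *)

(* Defs.v *)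
From HB Require Import structures.
From mathcomp Require Import all_boot all_order all_algebra.
From mathcomp Require Import reals.
Set Implicit Arguments. Unset Strict Implicit. Unset Printing Implicit Defensive.
Import Order.TTheory GRing.Theory Num.Theory.
Local Open Scope ring_scope.

Definition word (Sigma : finType) (m : nat) := {ffun 'I_m -> Sigma}.

Definition hamming (Sigma : finType) (m : nat) (x y : word Sigma m) : nat :=
  #|[set j : 'I_m | x j != y j]|.

Definition is_distr (R : realType) (Omega : finType) (mu : {ffun Omega -> R}) :=
  (forall w, 0 <= mu w) /\ \sum_(w : Omega) mu w = 1.

Definition Pr (R : realType) (Omega : finType) (mu : {ffun Omega -> R})
  (E : pred Omega) : R := \sum_(w : Omega | E w) mu w.

(* Deterministic (possibly adaptive) query algorithms: decision trees that
   query positions of an oracle in Sigma^n and output a value in O. *)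
Inductive dtree (n : nat) (Sigma O : Type) : Type :=
| Leaf of O
| Query of 'I_n & (Sigma -> dtree n Sigma O).

Arguments Leaf {n Sigma O}.
Arguments Query {n Sigma O}.

Fixpoint run_dtree (n : nat) (Sigma O : Type) (t : dtree n Sigma O)
  (y : 'I_n -> Sigma) : O :=
  match t with
  | Leaf o => o
  | Query j f => run_dtree (f (y j)) y
  end.

Inductive depth_le (n : nat) (Sigma O : Type) : nat -> dtree n Sigma O -> Prop :=
| depth_leaf d o : depth_le d (Leaf o)
| depth_query d j f : (forall a, depth_le d (f a)) -> depth_le d.+1 (Query j f).

(* (q, delta, s)-LDC: a randomized decoder (a distribution mu over random
   seeds, each seed giving a deterministic adaptive algorithm making at most q
   queries), with error probability at most s within radius delta * n. *)
Definition is_LDC (R : realType) (Sigma : finType) (k n : nat)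
  (C : word Sigma k -> word Sigma n) (q : nat) (delta s : R) : Prop :=
  exists (Omega : finType) (mu : {ffun Omega -> R})
         (Dec : 'I_k -> Omega -> dtree n Sigma Sigma),
    is_distr mu /\
    (forall i w, depth_le q (Dec i w)) /\
    (forall (b : word Sigma k) (i : 'I_k) (y : word Sigma n),
        (hamming y (C b))%:R <= delta * n%:R ->
        Pr mu (fun w => run_dtree (Dec i w) y != b i) <= s).

(* (q, delta, c, s)-RLDC with a NONADAPTIVE relaxed decoder: for each index i
   and seed w, the decoder queries the q positions Pos i w (fixed in advance,
   independent of the answers) and outputs Out i w (answers), where None
   stands for the rejection symbol bot. *)
Definition is_nonadaptive_RLDC (R : realType) (Sigma : finType) (k n : nat)
  (C : word Sigma k -> word Sigma n) (q : nat) (delta c s : R) : Prop :=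
  exists (Omega : finType) (mu : {ffun Omega -> R})
         (Pos : 'I_k -> Omega -> {ffun 'I_q -> 'I_n})
         (Out : 'I_k -> Omega -> {ffun 'I_q -> Sigma} -> option Sigma),
    is_distr mu /\
    let dec i w (y : word Sigma n) := Out i w [ffun t => y (Pos i w t)] in
    (forall (b : word Sigma k) (i : 'I_k),
        c <= Pr mu (fun w => dec i w (C b) == Some (b i))) /\
    (forall (b : word Sigma k) (i : 'I_k) (y : word Sigma n),
        (hamming y (C b))%:R <= delta * n%:R ->
        Pr mu (fun w => (dec i w y != Some (b i)) && (dec i w y != None)) <= s).

(* Main.v *)
Require Import Defs.
From HB Require Import structures.
From mathcomp Require Import all_boot all_order all_algebra.
From mathcomp Require Import reals.
From mathcomp Require Import ring lra.
Import Order.TTheory GRing.Theory Num.Theory.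
Local Open Scope ring_scope.

Section PrLemmas.
Variables (R : realType) (Omega : finType) (mu : {ffun Omega -> R}).
Hypothesis mu0 : forall w, 0 <= mu w.

Lemma Pr_ge0 E : 0 <= Pr mu E.
Proof. by apply: sumr_ge0 => w _. Qed.

Lemma Pr_mkcond E : Pr mu E = \sum_w (if E w then mu w else 0).
Proof. by rewrite /Pr big_mkcond. Qed.

Lemma Pr_sub (E F : pred Omega) : (forall w, E w -> F w) -> Pr mu E <= Pr mu F.
Proof.
move=> EF; rewrite !Pr_mkcond; apply: ler_sum => w _.
case Ew: (E w); first by rewrite EF.
by case: (F w).
Qed.

Lemma Pr_union (E F : pred Omega) : Pr mu (fun w => E w || F w) <= Pr mu E + Pr mu F.
Proof.
rewrite !Pr_mkcond -big_split /=; apply: ler_sum => w _.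
by case: (E w); case: (F w) => /=; rewrite ?addr0 ?add0r ?lerDl.
Qed.

Lemma Pr_compl (E : pred Omega) : Pr mu E + Pr mu (fun w => ~~ E w) = \sum_w mu w.
Proof. by rewrite [RHS](bigID E). Qed.

Lemma Pr_bigU (I : finType) (A : {set I}) (E : I -> pred Omega) :
  Pr mu (fun w => [exists j in A, E j w]) <= \sum_(j in A) Pr mu (E j).
Proof.
rewrite Pr_mkcond [X in _ <= X](eq_bigr (fun j => \sum_w (if E j w then mu w else 0))); last by move=> j _; rewrite Pr_mkcond.
rewrite exchange_big /=; apply: ler_sum => w _.
case: existsP => [[j /andP[jA Ej]]|_]; last by apply: sumr_ge0 => j _; case: (E j w).
rewrite (bigD1 j) //= Ej lerDl; apply: sumr_ge0 => j' _; by case: (E j' w).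
Qed.

End PrLemmas.

Section Pair.
Variables (R : realType) (Omega Sigma : finType) (mu : {ffun Omega -> R}).

Lemma Pr_pair (E : pred Omega) (F : pred Sigma) :
  Pr [ffun x : Omega * Sigma => mu x.1 / #|Sigma|%:R] (fun x => E x.1 && F x.2)
  = Pr mu E * #|F|%:R / #|Sigma|%:R.
Proof.
rewrite /Pr; under eq_bigr do rewrite ffunE.
rewrite -(@pair_big_dep _ _ _ _ _ E (fun _ u => F u) (fun w _ => mu w / #|Sigma|%:R)).
rewrite big_distrl big_distrl /=; apply: eq_bigr => w _.
by rewrite sumr_const -mulrnAl mulr_natr.
Qed.
End Pair.

Section CA.
Local Close Scope ring_scope.
Lemma card_agree (I T : finType) (S : {set I}) (z : {ffun I -> T}) :
  (#|[set g : {ffun I -> T} | [forall j in S, g j == z j]]| * #|T| ^ #|S| = #|T| ^ #|I|)%N.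
Proof.
pose F := fun j : I => if j \in S then pred1 (z j) else predT.
have h := @card_family I (fun _ => T) (fun j => F j).
have -> : #|[set g : {ffun I -> T} | [forall j in S, g j == z j]]| = foldr muln 1 [seq #|F x| | x : I].
  rewrite -h cardsE; apply: eq_card => g; rewrite !inE.
  by apply/forallP/familyP => H j; have := H j; rewrite /F; case: (j \in S).
rewrite foldrE big_map big_enum /=.
rewrite (bigID (mem S)) /= big1; last by move=> j jS; rewrite /F /= jS card1.
rewrite mul1n (eq_bigr (fun _ => #|T|)); last by move=> j /negbTE; rewrite /F => ->; rewrite cardT.
rewrite (eq_bigl (fun j => j \in ~: S)); last by move=> j; rewrite inE.
by rewrite prod_nat_const -expnD addnC cardsC.
Qed.
End CA.

Set Implicit Arguments. Unset Strict Implicit.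

Fixpoint qtree (n : nat) (Sigma : Type) (ps : seq 'I_n) (acc : seq Sigma)
  (G : seq Sigma -> Sigma) : dtree n Sigma Sigma :=
  match ps with
  | [::] => Leaf (G acc)
  | p :: ps' => Query p (fun a => qtree ps' (rcons acc a) G)
  end.

Lemma run_qtree (n : nat) (Sigma : Type) (ps : seq 'I_n) acc G (y : 'I_n -> Sigma) :
  run_dtree (qtree ps acc G) y = G (acc ++ map y ps).
Proof.
elim: ps acc => [|p ps IH] acc /=; first by rewrite cats0.
by rewrite IH cat_rcons.
Qed.

Lemma depth_qtree (n : nat) (Sigma : Type) (ps : seq 'I_n) acc (G : seq Sigma -> Sigma) :
  depth_le (size ps) (qtree ps acc G).
Proof.
elim: ps acc => [|p ps IH] acc /=; first by constructor.
by constructor => a; apply: IH.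
Qed.

Section Main.
Variables (R : realType) (Sigma : finType) (k n q : nat)
  (C : word Sigma k -> word Sigma n) (delta : R)
  (Omega : finType) (mu : {ffun Omega -> R})
  (Pos : 'I_k -> Omega -> {ffun 'I_q -> 'I_n})
  (Out : 'I_k -> Omega -> {ffun 'I_q -> Sigma} -> option Sigma).
Hypothesis mu0 : forall w, 0 <= mu w.
Hypothesis mu1 : \sum_w mu w = 1.
Hypothesis delta_gt0 : 0 < delta.
Hypothesis q_gt0 : (0 < q)%N.
Variable i : 'I_k.

Definition Pset w := [set Pos i w t | t : 'I_q].
Definition pj j := Pr mu (fun w => j \in Pset w).
Definition Hs := [set j : 'I_n | q%:R <= delta * n%:R * pj j].

Lemma pj_ge0 j : 0 <= pj j. Proof. exact: Pr_ge0. Qed.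

Lemma sum_pj : \sum_j pj j <= q%:R.
Proof.
rewrite /pj; under eq_bigr do rewrite Pr_mkcond.
rewrite exchange_big /=.
apply: le_trans (_ : \sum_w mu w * q%:R <= _); last by rewrite -mulr_suml mu1 mul1r.
apply: ler_sum => w _.
rewrite -big_mkcond /= sumr_const -[mu w *+ _]mulr_natr ler_wpM2l //.
rewrite ler_nat; apply: leq_trans (leq_imset_card _ _) _.
by rewrite card_ord.
Qed.

Lemma card_H : (#|Hs|%:R : R) <= delta * n%:R.
Proof.
have dn0 : 0 <= delta * n%:R by rewrite mulr_ge0 // ltW.
have qp : (0 : R) < q%:R by rewrite ltr0n.
rewrite -(ler_pM2r qp).
apply: le_trans (_ : \sum_(j in Hs) delta * n%:R * pj j <= _).
  rewrite mulr_natl -sumr_const; apply: ler_sum => j; rewrite inE.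
  by [].
rewrite -mulr_sumr ler_wpM2l //.
apply: le_trans (sum_pj).
rewrite [X in _ <= X](bigID (mem Hs)) /= lerDl; apply: sumr_ge0 => j _; exact: pj_ge0.
Qed.

Definition hit (y : word Sigma n) (b : word Sigma k) w :=
  [exists t, (Pos i w t \notin Hs) && (y (Pos i w t) != C b (Pos i w t))].

Lemma hit_bound (r : R) y b : 0 <= r -> (hamming y (C b))%:R <= r * n%:R ->
  Pr mu (hit y b) <= r * q%:R / delta.
Proof.
move=> r0 hy.
set D := [set j | y j != C b j] :\: Hs.
apply: le_trans (_ : Pr mu (fun w => [exists j in D, j \in Pset w]) <= _).
  apply: Pr_sub => // w /existsP [t /andP [tH tD]]; apply/existsP; exists (Pos i w t).
  by rewrite in_setD tH inE tD /=; apply/imsetP; exists t.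
apply: le_trans (@Pr_bigU _ _ mu mu0 _ D (fun j w => j \in Pset w)) _.
have rhs0 : 0 <= r * q%:R / delta by rewrite divr_ge0 ?mulr_ge0 // ltW.
have [D0|Dpos] := posnP #|D|.
  by rewrite (cards0_eq D0) big_set0.
have npos : (0 < n)%N.
  by apply: leq_trans Dpos _; apply: leq_trans (max_card _) _; rewrite card_ord.
have dn : 0 < delta * n%:R by rewrite mulr_gt0 // ltr0n.
rewrite -(ler_pM2l dn).
have -> : delta * n%:R * (r * q%:R / delta) = r * q%:R * n%:R.
  by field; rewrite gt_eqF.
rewrite mulr_sumr.
apply: le_trans (_ : \sum_(j in D) (q%:R : R) <= _).
  apply: ler_sum => j; rewrite !inE => /andP [jH _].
  by rewrite ltW // ltNge; exact: jH.
rewrite sumr_const -[q%:R *+ _]mulr_natl mulrAC ler_wpM2r //.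
apply: le_trans hy; rewrite ler_nat /hamming.
by apply: subset_leq_card; apply/subsetP => j; rewrite !inE => /andP [].
Qed.

Hypothesis N_gt0 : (0 < #|Sigma|)%N.

Definition badO (o : option Sigma) (b : word Sigma k) := (o != Some (b i)) && (o != None).

Definition dang b w := [exists z : {ffun 'I_n -> Sigma},
  [forall t, (Pos i w t \notin Hs) ==> (z (Pos i w t) == C b (Pos i w t))]
  && badO (Out i w [ffun t => z (Pos i w t)]) b].

Lemma card_Pset w : (#|Pset w| <= q)%N.
Proof. by apply: leq_trans (leq_imset_card _ _) _; rewrite card_ord. Qed.

Lemma dang_bound (s : R) b :
 (forall y : word Sigma n, (hamming y (C b))%:R <= delta * n%:R ->
    Pr mu (fun w => badO (Out i w [ffun t => y (Pos i w t)]) b) <= s) ->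
 Pr mu (dang b) <= s * #|Sigma|%:R ^+ q.
Proof.
move=> snd.
pose N := #|Sigma|.
pose yg (g : {ffun 'I_n -> Sigma}) : {ffun 'I_n -> Sigma} := [ffun j => if j \in Hs then g j else C b j].
pose bw w (g : {ffun 'I_n -> Sigma}) := badO (Out i w [ffun t => yg g (Pos i w t)]) b.
have hyg g : (hamming (yg g) (C b))%:R <= delta * n%:R.
  apply: le_trans card_H; rewrite ler_nat /hamming; apply: subset_leq_card.
  apply/subsetP => j; rewrite inE ffunE; case: (j \in Hs) => //.
  by rewrite eqxx.
have sum_le : \sum_(g : {ffun 'I_n -> Sigma}) Pr mu (fun w => bw w g) <= (N ^ n)%:R * s.
  apply: le_trans (_ : \sum_(g : {ffun 'I_n -> Sigma}) s <= _).
    by apply: ler_sum => g _; apply: snd.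
  by rewrite sumr_const card_ffun card_ord mulr_natl.
have eqsum : \sum_(g : {ffun 'I_n -> Sigma}) Pr mu (fun w => bw w g)
    = \sum_w mu w * #|[set g | bw w g]|%:R.
  under eq_bigr do rewrite Pr_mkcond.
  rewrite exchange_big /=; apply: eq_bigr => w _.
  rewrite -big_mkcond /= (eq_bigl (fun g => g \in [set g | bw w g])); last by move=> g; rewrite inE.
  by rewrite sumr_const mulr_natr.
have key : Pr mu (dang b) * (N ^ n)%:R <= (\sum_w mu w * #|[set g | bw w g]|%:R) * (N ^ q)%:R.
  rewrite /Pr mulr_suml mulr_suml.
  apply: le_trans (_ : \sum_(w | dang b w) mu w * #|[set g | bw w g]|%:R * (N ^ q)%:R <= _); last first.
    rewrite [X in _ <= X](bigID (dang b)) /= lerDl; apply: sumr_ge0 => w _.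
    by rewrite !mulr_ge0.
  apply: ler_sum => w /existsP [z /andP [zH zbad]].
  rewrite -mulrA ler_wpM2l // -natrM ler_nat.
  have sub : [set g : {ffun 'I_n -> Sigma} | [forall j in Pset w :&: Hs, g j == z j]] \subset [set g | bw w g].
    apply/subsetP => g; rewrite !inE => /forallP gz.
    rewrite /bw (_ : [ffun t => yg g (Pos i w t)] = [ffun t => z (Pos i w t)]) //.
    apply/ffunP => t; rewrite !ffunE.
    case: ifP => hH.
      have PtP : Pos i w t \in Pset w by apply/imsetP; exists t.
      by have := gz (Pos i w t); rewrite inE hH andbT PtP /= => /eqP.
    by move/forallP: zH => /(_ t); rewrite hH /= => /eqP.
  have hS : (#|Pset w :&: Hs| <= q)%N.
    by apply: leq_trans (subset_leq_card (subsetIl _ _)) (card_Pset w).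
  have := @card_agree _ _ (Pset w :&: Hs) z; rewrite card_ord => <-.
  by apply: leq_mul (subset_leq_card sub) (leq_pexp2l N_gt0 hS).
rewrite -eqsum in key.
have Nn : (0 : R) < (N ^ n)%:R by rewrite ltr0n expn_gt0 N_gt0.
rewrite -(ler_pM2r Nn); apply: le_trans key _.
rewrite -natrX -/N.
have Nq : (0 : R) <= (N ^ q)%:R by [].
apply: le_trans (ler_wpM2r Nq sum_le) _.
by rewrite le_eqVlt; apply/orP; left; apply/eqP; ring.
Qed.

Definition complete b w := Out i w [ffun t => C b (Pos i w t)] == Some (b i).

Definition cand w (a : {ffun 'I_q -> Sigma}) (sg : Sigma) :=
  [exists z : {ffun 'I_n -> Sigma},
    [forall t, (Pos i w t \notin Hs) ==> (z (Pos i w t) == a t)]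
    && (Out i w [ffun t => z (Pos i w t)] == Some sg)].

Definition Gdec w u a := if cand w a u then u else odflt u [pick sg | cand w a sg].

Definition Dec' (x : Omega * Sigma) : dtree n Sigma Sigma :=
  qtree [seq Pos i x.1 t | t <- enum 'I_q] [::]
    (fun l => Gdec x.1 x.2 [ffun t : 'I_q => nth x.2 l t]).

Lemma run_Dec' x (y : word Sigma n) :
  run_dtree (Dec' x) y = Gdec x.1 x.2 [ffun t => y (Pos i x.1 t)].
Proof.
rewrite /Dec' run_qtree /=; congr Gdec; apply/ffunP => t; rewrite !ffunE.
rewrite -map_comp (nth_map t) ?size_enum_ord //.
by rewrite nth_ord_enum.
Qed.

Lemma depth_Dec' x : depth_le q (Dec' x).
Proof.
have := depth_qtree [seq Pos i x.1 t | t <- enum 'I_q] [::]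
    (fun l => Gdec x.1 x.2 [ffun t : 'I_q => nth x.2 l t]).
by rewrite size_map size_enum_ord.
Qed.

Lemma Gdec_correct b (y : word Sigma n) w u : ~~ hit y b w -> complete b w ->
  ~~ dang b w || (u == b i) -> Gdec w u [ffun t => y (Pos i w t)] = b i.
Proof.
move=> nh cpl du.
set a := [ffun t => y (Pos i w t)].
have ya t : Pos i w t \notin Hs -> a t = C b (Pos i w t).
  move=> tH; rewrite /a ffunE; apply/eqP; apply: contraNT nh => ne.
  by apply/existsP; exists t; rewrite tH ne.
have cb : cand w a (b i).
  apply/existsP; exists (C b); move/eqP: (cpl) => ->; rewrite eqxx andbT; apply/forallP => t.
  by apply/implyP => tH; rewrite ya.
have onlyb sg : ~~ dang b w -> cand w a sg -> sg = b i.
  move=> nd /existsP [z /andP [zc /eqP zo]].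
  have : ~~ badO (Out i w [ffun t => z (Pos i w t)]) b.
    apply: contra nd => bd; apply/existsP; exists z; rewrite bd andbT.
    apply/forallP => t; apply/implyP => tH.
    by move/forallP: zc => /(_ t); rewrite tH /= ya.
  by rewrite zo /badO negb_and !negbK => /orP [/eqP [] | //].
rewrite /Gdec; case: ifP => cu.
  by case/orP: du => [nd | /eqP //]; apply: onlyb.
have nd : ~~ dang b w.
  by case/orP: du => // /eqP ub; rewrite ub cb in cu.
case: pickP => [sg csg | none] /=; first exact: onlyb.
by have := none (b i); rewrite cb.
Qed.

Definition mu' := [ffun x : Omega * Sigma => mu x.1 / #|Sigma|%:R].

Lemma mu'0 x : 0 <= mu' x.
Proof. by rewrite ffunE divr_ge0. Qed.

Lemma Nne0 : (#|Sigma|%:R : R) != 0.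
Proof. by rewrite pnatr_eq0 -lt0n. Qed.

Lemma Pr_fst (E : pred Omega) : Pr mu' (fun x => E x.1) = Pr mu E.
Proof.
transitivity (Pr mu' (fun x => E x.1 && predT x.2)); first by apply: eq_bigl => x; rewrite andbT.
by rewrite Pr_pair mulfK // Nne0.
Qed.

Lemma mu'_distr : is_distr mu'.
Proof.
split; first exact: mu'0.
have := Pr_fst predT; rewrite /Pr /= => ->; exact: mu1.
Qed.

Lemma err_bound (eps s r : R) :
  (forall b, 1 - eps <= Pr mu (complete b)) ->
  (forall b (y : word Sigma n), (hamming y (C b))%:R <= delta * n%:R ->
      Pr mu (fun w => badO (Out i w [ffun t => y (Pos i w t)]) b) <= s) ->
  0 <= r ->
  forall b (y : word Sigma n), (hamming y (C b))%:R <= r * n%:R ->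
  Pr mu' (fun x => run_dtree (Dec' x) y != b i)
    <= eps + s * #|Sigma|%:R ^+ q * (1 - (#|Sigma|%:R)^-1) + r * q%:R / delta.
Proof.
move=> hc hs r0 b y hy.
apply: le_trans (_ : Pr mu' (fun x => (hit y b x.1 || ~~ complete b x.1)
                                   || (dang b x.1 && predC1 (b i) x.2)) <= _).
  apply: Pr_sub; first exact: mu'0.
  move=> x; rewrite run_Dec' => ne.
  case: (boolP (hit y b x.1)) => [//| nh].
  case: (boolP (complete b x.1)) => [cp | _]; last by rewrite orbT.
  rewrite /=; case: (boolP (dang b x.1)) => [dg|nd] /=.
    change (x.2 != b i); apply: contra ne => e; apply/eqP.
    by apply: Gdec_correct => //; rewrite e orbT.
  by exfalso; move/eqP: ne; apply; apply: Gdec_correct => //; rewrite nd.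
apply: le_trans (@Pr_union _ _ mu' mu'0 _ _) _.
rewrite (Pr_fst (fun w => hit y b w || ~~ complete b w)).
rewrite Pr_pair cardC1.
have h1 := @Pr_union _ _ mu mu0 (hit y b) (fun w => ~~ complete b w).
have h2 := hit_bound r0 hy.
have h3 := @Pr_compl _ _ mu (complete b); rewrite mu1 in h3.
have h4 := hc b.
have h5 := dang_bound (hs b).
have eN : (#|Sigma|.-1)%:R / #|Sigma|%:R = 1 - (#|Sigma|%:R : R)^-1.
  by rewrite -subn1 natrB // mulrBl divff ?Nne0 // mul1r.
have N1 : 0 <= 1 - (#|Sigma|%:R : R)^-1.
  rewrite subr_ge0 invf_le1 ?ler1n ?ltr0n //.
have h6 := ler_wpM2r N1 h5.
rewrite -mulrA eN.
lra.
Qed.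

End Main.

Lemma part1 :
  (forall (R : realType) (Sigma : finType) (k n q : nat)
     (C : word Sigma k -> word Sigma n) (delta eps s r : R),
     0 < delta ->
     is_nonadaptive_RLDC C q delta (1 - eps) s ->
     s < ((#|Sigma|%:R) ^+ q)^-1 ->
     0 < r ->
     r < delta * (#|Sigma|%:R - 1) / (q%:R * #|Sigma|%:R)
         * (1 - eps * #|Sigma|%:R / (#|Sigma|%:R - 1)
              - s * (#|Sigma|%:R) ^+ q) ->
     is_LDC C q r
       (eps + s * (#|Sigma|%:R) ^+ q * (1 - (#|Sigma|%:R)^-1)
        + r * q%:R / delta)).
Proof.
move=> R Sigma k n q C delta eps s r dpos [Omega [mu [Pos [Out [[mu0 mu1] H]]]]] hs rpos hr.
move: H => /= [hc hsd].
have [q0|qpos] := posnP q.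
  by move: hr; rewrite q0 mul0r invr0 mulr0 mul0r => /(lt_trans rpos); rewrite ltxx.
have [N0|Npos] := posnP #|Sigma|.
  by move: hr; rewrite N0 mulr0 invr0 mulr0 mul0r => /(lt_trans rpos); rewrite ltxx.
exists (Omega * Sigma)%type, (mu' Sigma mu), (fun i x => Dec' delta mu Pos Out i x).
split; first exact: mu'_distr.
split; first by move=> i x; apply: depth_Dec'.
move=> b i y hy.
apply: (@err_bound R Sigma k n q C delta Omega mu Pos Out mu0 mu1 dpos qpos i Npos eps s r _ _ (ltW rpos) b y hy).
  by move=> b'; apply: hc.
by move=> b' y' hy'; apply: hsd.
Qed.

Lemma part2 :
  (forall (R : realType) (k n q : nat)
     (C : word bool k -> word bool n) (delta eps s r : R),
     0 < delta ->
     is_nonadaptive_RLDC C q delta (1 - eps) s ->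
     s < ((2 : R) ^+ q)^-1 ->
     0 < r ->
     r < delta * (2 - 1) / (q%:R * 2)
         * (1 - eps * 2 / (2 - 1) - s * 2 ^+ q) ->
     is_LDC C q r (eps + s * 2 ^+ q / 2 + r * q%:R / delta)).
Proof.
move=> R k n q C delta eps s r dpos H hs rpos hr.
have := @part1 R bool k n q C delta eps s r dpos H; rewrite card_bool => /(_ hs rpos hr).
have -> : s * 2 ^+ q / 2 = s * 2 ^+ q * (1 - 2^-1) :> R by field.
by [].
Qed.

Theorem mainTheorem6 :
  (forall (R : realType) (Sigma : finType) (k n q : nat)
     (C : word Sigma k -> word Sigma n) (delta eps s r : R),
     0 < delta ->
     is_nonadaptive_RLDC C q delta (1 - eps) s ->
     s < ((#|Sigma|%:R) ^+ q)^-1 ->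
     0 < r ->
     r < delta * (#|Sigma|%:R - 1) / (q%:R * #|Sigma|%:R)
         * (1 - eps * #|Sigma|%:R / (#|Sigma|%:R - 1)
              - s * (#|Sigma|%:R) ^+ q) ->
     is_LDC C q r
       (eps + s * (#|Sigma|%:R) ^+ q * (1 - (#|Sigma|%:R)^-1)
        + r * q%:R / delta))
  /\
  (forall (R : realType) (k n q : nat)
     (C : word bool k -> word bool n) (delta eps s r : R),
     0 < delta ->
     is_nonadaptive_RLDC C q delta (1 - eps) s ->
     s < ((2 : R) ^+ q)^-1 ->
     0 < r ->
     r < delta * (2 - 1) / (q%:R * 2)
         * (1 - eps * 2 / (2 - 1) - s * 2 ^+ q) ->
     is_LDC C q r (eps + s * 2 ^+ q / 2 + r * q%:R / delta)).
Proof. exact: (conj part1 part2). Qed.
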